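(* There exist numerical constants $c,c'>0$ and $\varepsilon_0>0$ such that for every $\varepsilon\in(0,\varepsilon_0)$ there exists a model class $\mathcal M$ with $$\sup_{\bar M\in\mathrm{co}(\mathcal M)}\mathrm{dec}^{\mathrm c}_{\mathrm r,\varepsilon}(\mathcal M,\bar M)\le c\cdot\varepsilon,$$ yet $$\mathrm{dec}^{\mathrm c}_{\mathrm r,\varepsilon}(\mathcal M)=\sup_{\bar M\in\mathrm{co}(\mathcal M)}\mathrm{dec}^{\mathrm c}_{\mathrm r,\varepsilon}(\mathcal M\cup\{\bar M\},\bar M)\ge c'\cdot\varepsilon^{2/3}.$$
   Context: Models are kernels $M:\Pi\to\Delta([0,1]\times\mathcal O)$ for a decision space $\Pi$ and observation space $\mathcal O$ (rewards in $[0,1]$). $f^M(\pi)=\mathbb E_{(r,o)\sim M(\pi)}[r]$, $\pi_M\in\arg\max f^M$, $g^M(\pi)=f^M(\pi_M)-f^M(\pi)$; $D^2_H$ is squared Hellinger distance; $\mathrm{co}(\mathcal M)$ is the set of mixtures $\pi\mapsto\mathbb E_{M\sim\nu}[M(\pi)]$, $\nu\in\Delta(\mathcal M)$. Constrained regret DEC: $\mathrm{dec}^{\mathrm c}_{\mathrm r,\varepsilon}(\mathcal M',\bar M)=\inf_{p\in\Delta(\Pi)}\sup_{M\in\mathcal M'}\{\mathbb E_{\pi\sim p}[g^M(\pi)]:\mathbb E_{\pi\sim p}[D^2_H(M(\pi),\bar M(\pi))]\le\varepsilon^2\}$ (value $0$ if empty). *)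

(* Defs.v *)
From HB Require Import structures.
From mathcomp Require Import all_boot all_order all_algebra.
From mathcomp Require Import classical_sets boolp reals exp.
Set Implicit Arguments. Unset Strict Implicit. Unset Printing Implicit Defensive.
Import Order.TTheory GRing.Theory Num.Theory.
Local Open Scope ring_scope.
Local Open Scope classical_set_scope.

Section Defs.
Variables (R : realType) (Pi : finType) (O : eqType).

(* A finitely supported distribution on [0,1] x O, given as a list of
   (weight, (reward, observation)) atoms. *)
Definition dist := seq (R * (R * O)).

Definition mass (d : dist) (z : R * O) : R := \sum_(w <- d | w.2 == z) w.1.

Definition valid_dist (d : dist) : Prop :=
  (forall w, w \in d -> 0 <= w.1 /\ 0 <= w.2.1 <= 1) /\ \sum_(w <- d) w.1 = 1.

Definition hell2 (d1 d2 : dist) : R :=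
  \sum_(z <- undup (map snd (d1 ++ d2))) (Num.sqrt (mass d1 z) - Num.sqrt (mass d2 z)) ^+ 2.

Definition mean_reward (d : dist) : R := \sum_(w <- d) w.1 * w.2.1.

Definition model := Pi -> dist.

Definition valid_model (M : model) : Prop := forall pi, valid_dist (M pi).

Definition fM (M : model) (pi : Pi) : R := mean_reward (M pi).

(* f^M(pi_M) = max_pi f^M(pi) (f^M >= 0 for valid models, so 0 is a harmless seed) *)
Definition fstar (M : model) : R := \big[Num.max/0]_(pi : Pi) fM M pi.

Definition gM (M : model) (pi : Pi) : R := fstar M - fM M pi.

Definition is_pdist (p : {ffun Pi -> R}) : Prop :=
  (forall pi, 0 <= p pi) /\ \sum_pi p pi = 1.

Definition Ep (p : {ffun Pi -> R}) (h : Pi -> R) : R := \sum_pi p pi * h pi.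

Definition valid_class (Ms : seq model) : Prop :=
  forall i : 'I_(size Ms), valid_model (nth (fun _ => [::]) Ms i).

(* mixture pi |-> E_{M ~ nu}[M(pi)] with nu given by weights on the list *)
Definition mixture (Ms : seq model) (nu : 'I_(size Ms) -> R) : model :=
  fun pi => flatten [seq [seq (nu i * x.1, x.2) | x <- nth (fun _ => [::]) Ms i pi]
                    | i <- enum 'I_(size Ms)].

Definition co (Ms : seq model) : set model :=
  [set Mbar | exists nu : 'I_(size Ms) -> R,
     (forall i, 0 <= nu i) /\ \sum_i nu i = 1 /\ Mbar = mixture nu].

(* inner value: sup over feasible M in M' of E_p[g^M] (0 if none feasible) *)
Definition dec_inner (Ms' : seq model) (Mbar : model) (eps : R)
  (p : {ffun Pi -> R}) : R :=
  \big[Num.max/0]_(M <- Ms' | Ep p (fun pi => hell2 (M pi) (Mbar pi)) <= eps ^+ 2)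
     Ep p (gM M).

Definition dec_c (Ms' : seq model) (Mbar : model) (eps : R) : R :=
  inf [set v | exists p, is_pdist p /\ v = dec_inner Ms' Mbar eps p].

Definition dec_c_co (Ms : seq model) (eps : R) : R :=
  sup [set v | exists Mbar, co Ms Mbar /\ v = dec_c Ms Mbar eps].

Definition dec_c_class (Ms : seq model) (eps : R) : R :=
  sup [set v | exists Mbar, co Ms Mbar /\ v = dec_c (Mbar :: Ms) Mbar eps].

End Defs.

(* Main.v *)
Require Import Defs.
From HB Require Import structures.
From mathcomp Require Import all_boot all_order all_algebra.
From mathcomp Require Import classical_sets boolp reals exp.
From mathcomp Require Import ring lra.
Import Order.TTheory GRing.Theory Num.Theory.
Local Open Scope ring_scope.
Section Gen.
Variable R : realType.

Lemma big_opt (T : finType) (K : Type) (op : K -> K -> K) (idx : K) (F : option T -> K) :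
  \big[op/idx]_(pi : option T) F pi = op (F None) (\big[op/idx]_(i : T) F (Some i)).
Proof.
have -> : index_enum (option T) = None :: map Some (index_enum T).
  by rewrite /index_enum !unlock /= /option_enum !unlock.
by rewrite big_cons big_map.
Qed.

Lemma bmax_ge0 (T : Type) (r : seq T) (P : pred T) (F : T -> R) :
  0 <= \big[Num.max/0]_(x <- r | P x) F x.
Proof.
elim: r => [|x r IH]; rewrite ?big_nil ?big_cons //.
by case: ifP => _ //; rewrite le_max IH orbT.
Qed.

Lemma bmax_ge (T : eqType) (r : seq T) (P : pred T) (F : T -> R) x :
  x \in r -> P x -> F x <= \big[Num.max/0]_(y <- r | P y) F y.
Proof.
elim: r => [|y r IH] //; rewrite inE big_cons => /orP [/eqP <-|xr] Px.
  by rewrite Px le_max lexx.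
by case: ifP => _; [rewrite le_max IH ?orbT | exact: IH].
Qed.

Lemma bmax_le (T : eqType) (r : seq T) (P : pred T) (F : T -> R) c :
  0 <= c -> (forall x, x \in r -> P x -> F x <= c) ->
  \big[Num.max/0]_(y <- r | P y) F y <= c.
Proof.
move=> c0; elim: r => [|y r IH] H; rewrite ?big_nil ?big_cons //.
have IH' : \big[Num.max/0]_(y <- r | P y) F y <= c.
  by apply: IH => x xr; apply: H; rewrite inE xr orbT.
case: ifP => Py //; rewrite ge_max IH' andbT; apply: H => //; exact: mem_head.
Qed.

Variables (O : eqType).

Lemma mass_point (z0 z : R * O) : mass [:: (1, z0)] z = (z0 == z)%:R.
Proof. by rewrite /mass big_cons big_nil /=; case: eqP => _; rewrite ?addr0 ?add0r. Qed.

Lemma mass_ge0 (d : dist R O) z : (forall w, w \in d -> 0 <= w.1) -> 0 <= mass d z.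
Proof. by move=> H; rewrite /mass big_seq_cond; apply: sumr_ge0 => w /andP[/H]. Qed.

Lemma sum_mass_uniq (d : dist R O) (s : seq (R * O)) : uniq s -> {subset map snd d <= s} ->
  \sum_(z <- s) mass d z = \sum_(w <- d) w.1.
Proof.
move=> us sub; rewrite /mass.
under eq_bigr do rewrite big_mkcond.
rewrite exchange_big /=; apply: eq_big_seq => w wd.
rewrite -big_mkcond -big_filter.
have -> : [seq i <- s | w.2 == i] = [:: w.2].
  rewrite -(filter_pred1_uniq us (sub _ (map_f snd wd))).
  by apply: eq_filter => i; rewrite /= eq_sym.
by rewrite big_seq1.
Qed.

Lemma hell2_point (z : R * O) (d : dist R O) :
  (forall w, w \in d -> 0 <= w.1) -> \sum_(w <- d) w.1 = 1 ->
  hell2 [:: (1, z)] d = 2 - 2 * Num.sqrt (mass d z).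
Proof.
move=> H1 H2; rewrite /hell2.
set s := undup _.
have us : uniq s by exact: undup_uniq.
have zs : z \in s.
  by rewrite mem_undup; apply/mapP; exists (1, z); rewrite ?mem_cat ?mem_head.
have sub : {subset map snd d <= s} by move=> x xd; rewrite mem_undup map_cat mem_cat xd orbT.
rewrite (bigD1_seq z) //= mass_point eqxx sqrtr1.
have Hs := @sum_mass_uniq d s us sub; rewrite H2 (bigD1_seq z) //= in Hs.
under eq_bigl do rewrite eq_sym.
rewrite (eq_bigr (fun i => mass d i)); last first.
  move=> i /negbTE zi; rewrite mass_point zi sqrtr0 sub0r sqrrN sqr_sqrtr //.
  exact: mass_ge0.
under [in X in _ + X = _]eq_bigl do rewrite eq_sym.
have m0 := @mass_ge0 d z H1.
have sq := sqr_sqrtr m0.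
have -> : \sum_(i <- s | i != z) mass d i = 1 - mass d z.
  by rewrite -Hs; under eq_bigl do rewrite eq_sym; ring.
set m := mass d z in sq m0 *; set t := Num.sqrt m in sq *.
rewrite -sq; ring.
Qed.

Lemma hell2_same (d : dist R O) : hell2 d d = 0.
Proof. by rewrite /hell2 big1 // => z _; rewrite subrr expr0n. Qed.

Lemma hell2_ge0 (d1 d2 : dist R O) : 0 <= hell2 d1 d2.
Proof. by rewrite /hell2; apply: sumr_ge0 => z _; exact: sqr_ge0. Qed.

End Gen.

Section Mix.
Variables (R : realType) (Pi : finType) (O : eqType).

Lemma sum_enum_ord n (F : 'I_n -> R) : \sum_(i <- enum 'I_n) F i = \sum_i F i.
Proof. by rewrite enumT /index_enum unlock. Qed.

Lemma mixture_mass (Ms : seq (model R Pi O)) (nu : 'I_(size Ms) -> R) pi z :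
  mass (mixture nu pi) z = \sum_i nu i * mass (nth (fun _ => [::]) Ms i pi) z.
Proof.
rewrite /mass /mixture big_flatten /= big_map sum_enum_ord.
by apply: eq_bigr => i _; rewrite big_map mulr_sumr.
Qed.

Lemma mixture_sum (Ms : seq (model R Pi O)) (nu : 'I_(size Ms) -> R) pi :
  \sum_(w <- mixture nu pi) w.1 = \sum_i nu i * \sum_(w <- nth (fun _ => [::]) Ms i pi) w.1.
Proof.
rewrite /mixture big_flatten /= big_map sum_enum_ord.
by apply: eq_bigr => i _; rewrite big_map mulr_sumr.
Qed.

Lemma mixture_mean (Ms : seq (model R Pi O)) (nu : 'I_(size Ms) -> R) pi :
  mean_reward (mixture nu pi) = \sum_i nu i * mean_reward (nth (fun _ => [::]) Ms i pi).
Proof.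
rewrite /mean_reward /mixture big_flatten /= big_map sum_enum_ord.
by apply: eq_bigr => i _; rewrite big_map mulr_sumr; apply: eq_bigr => x _ /=; rewrite mulrA.
Qed.

Lemma mixture_valid (Ms : seq (model R Pi O)) (nu : 'I_(size Ms) -> R) pi :
  valid_class Ms -> (forall i, 0 <= nu i) -> \sum_i nu i = 1 ->
  (forall w, w \in mixture nu pi -> 0 <= w.1) /\ \sum_(w <- mixture nu pi) w.1 = 1.
Proof.
move=> vM nu0 nu1; split.
  move=> w /flattenP [s /mapP [i _ ->] /mapP [x xin ->]] /=.
  by apply: mulr_ge0 => //; have [/(_ _ xin) [] ] := vM i pi.
rewrite mixture_sum -nu1; apply: eq_bigr => i _.
by have [_ ->] := vM i pi; rewrite mulr1.
Qed.

End Mix.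

Section Constr.
Variables (R : realType) (N : nat).

Definition Mk (k : nat) : model R (option 'I_N) unit := fun pi =>
  match pi with
  | None => [:: (1, (2^-1, tt))]
  | Some j => [:: (1, ((k == val j)%:R, tt))]
  end.

Definition Ms : seq (model R (option 'I_N) unit) := mkseq Mk N.

Lemma size_Ms : size Ms = N.
Proof. by rewrite size_mkseq. Qed.

Lemma nth_Ms (i : 'I_(size Ms)) : nth (fun _ => [::]) Ms i = Mk i.
Proof. by rewrite nth_mkseq // (leq_trans (ltn_ord i)) // size_Ms. Qed.

Lemma valid_Ms : valid_class Ms.
Proof.
move=> i pi; rewrite nth_Ms; case: pi => [j|] /=; split;
  rewrite ?big_seq1 // => w; rewrite inE => /eqP -> /=; split => //.
  by case: (_ == _); rewrite /= ?lexx ?ler01.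
by rewrite invr_ge0 ler0n /= invf_le1 ?ler1n.
Qed.

Lemma mean_point (r : R) : mean_reward [:: (1, (r, tt))] = r.
Proof. by rewrite /mean_reward big_seq1 mul1r. Qed.

Lemma fM_Mk_None k : fM (Mk k) None = 2^-1.
Proof. exact: mean_point. Qed.

Lemma fM_Mk_Some k j : fM (Mk k) (Some j) = (k == val j)%:R.
Proof. exact: mean_point. Qed.

Lemma fstar_Mk (k : 'I_N) : fstar (Mk k) = 1.
Proof.
apply/eqP; rewrite eq_le; apply/andP; split.
  apply: bmax_le => // -[j|] _ _; rewrite ?fM_Mk_Some ?fM_Mk_None.
    by case: (_ == _); rewrite /= ?lexx ?ler01.
  by rewrite invf_le1 ?ler1n.
have := @bmax_ge R _ (index_enum (option 'I_N)) xpredT (fM (Mk k)) (Some k).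
by rewrite fM_Mk_Some eqxx; apply; rewrite ?mem_index_enum.
Qed.

Lemma sum_ind (F : 'I_N -> R) (k : 'I_N) : \sum_j F j * (val k == val j)%:R = F k.
Proof.
rewrite (bigD1 k) //= eqxx mulr1 big1 ?addr0 // => j jk.
have -> : (val k == val j) = false by rewrite eq_sym; exact: negbTE jk.
by rewrite mulr0.
Qed.

Definition mu (nu : 'I_(size Ms) -> R) (j : nat) := \sum_i nu i * (val i == j)%:R.

Lemma mu_val (nu : 'I_(size Ms) -> R) (j : 'I_N) :
  mu nu (val j) = nu (cast_ord (esym size_Ms) j).
Proof.
rewrite /mu (bigD1 (cast_ord (esym size_Ms) j)) //= eqxx mulr1 big1 ?addr0 // => i ij.
have -> : (val i == val j) = false by apply/negbTE; move: ij; apply: contra => /eqP h; apply/eqP/val_inj.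
by rewrite mulr0.
Qed.

Lemma mass_mix_Some (nu : 'I_(size Ms) -> R) k (j : 'I_N) :
  mass (mixture nu (Some j)) ((k == val j)%:R, tt) =
  if k == val j then mu nu j else \sum_i nu i - mu nu j.
Proof.
rewrite mixture_mass /mu.
under eq_bigr do rewrite nth_Ms /Mk mass_point xpair_eqE eqxx andbT eqr_nat.
case: (k == val j) => /=.
  by apply: eq_bigr => i _; case: (val i == val j).
rewrite -sumrB; apply: eq_bigr => i _.
by case: (val i == val j) => /=; rewrite ?mulr1 ?mulr0 ?subrr ?subr0.
Qed.

Lemma mass_mix_None (nu : 'I_(size Ms) -> R) :
  mass (mixture nu None) (2^-1, tt) = \sum_i nu i.
Proof.
rewrite mixture_mass; apply: eq_bigr => i _.
by rewrite nth_Ms /Mk mass_point eqxx mulr1.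
Qed.

Lemma fM_mix_None (nu : 'I_(size Ms) -> R) : fM (mixture nu) None = \sum_i nu i * 2^-1.
Proof.
rewrite /fM mixture_mean; apply: eq_bigr => i _.
by rewrite nth_Ms mean_point.
Qed.

Lemma fM_mix_Some (nu : 'I_(size Ms) -> R) j : fM (mixture nu) (Some j) = mu nu j.
Proof.
rewrite /fM mixture_mean; apply: eq_bigr => i _.
by rewrite nth_Ms mean_point.
Qed.

End Constr.

Section Gen2.
Variables (R : realType) (Pi : finType) (O : eqType).

Lemma dec_c_le (Ms' : seq (model R Pi O)) Mbar eps p : is_pdist p ->
  dec_c Ms' Mbar eps <= dec_inner Ms' Mbar eps p.
Proof.
move=> pp; apply: ge_inf; last by exists p.
by exists 0 => v [q [_ ->]]; exact: bmax_ge0.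
Qed.

Lemma dec_c_ge (Ms' : seq (model R Pi O)) Mbar eps c (p0 : {ffun Pi -> R}) : is_pdist p0 ->
  (forall p : {ffun Pi -> R}, is_pdist p -> c <= dec_inner Ms' Mbar eps p) ->
  c <= dec_c Ms' Mbar eps.
Proof.
move=> pp H; apply: lb_le_inf; first by exists (dec_inner Ms' Mbar eps p0), p0.
by move=> v [q [qp ->]]; exact: H.
Qed.

Lemma sum_le_total (I : finType) (F : I -> R) i : (forall j, 0 <= F j) -> F i <= \sum_j F j.
Proof.
move=> H; rewrite (bigD1 i) //= lerDl; exact: sumr_ge0.
Qed.

End Gen2.

Section Sq.
Variable R : realType.
Lemma sqb1 (x : R) : 0 <= x <= 1 -> x <= 2 - 2 * Num.sqrt (1 - x).
Proof.
move=> /andP[x0 x1]; have y0 : 0 <= 1 - x by lra.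
have := sqr_sqrtr y0; have := sqrtr_ge0 (1 - x).
set t := Num.sqrt _ => t0 tt; nra.
Qed.
Lemma sqb2 (x : R) : 0 <= x <= 1 -> 2 - 2 * Num.sqrt (1 - x) <= 2 * x.
Proof.
move=> /andP[x0 x1]; have y0 : 0 <= 1 - x by lra.
have := sqr_sqrtr y0; have := sqrtr_ge0 (1 - x).
set t := Num.sqrt _ => t0 tt; nra.
Qed.
Lemma sqb3 (x : R) : 0 <= x <= 16^-1 -> 3/2 <= 2 - 2 * Num.sqrt x.
Proof.
move=> /andP[x0 x1].
have := sqr_sqrtr x0; have := sqrtr_ge0 x.
set t := Num.sqrt _ => t0 tt; nra.
Qed.
Lemma sqb4 (x : R) : 2 - 2 * Num.sqrt x <= 2.
Proof. have := sqrtr_ge0 x; lra. Qed.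
End Sq.

Section Up.
Variables (R : realType) (N : nat).

Lemma Ep_opt (p : {ffun option 'I_N -> R}) h :
  Ep p h = p None * h None + \sum_j p (Some j) * h (Some j).
Proof. by rewrite /Ep big_opt. Qed.

Definition pd (j : 'I_N) : {ffun option 'I_N -> R} := [ffun pi => (pi == Some j)%:R].

Lemma Ep_pd j h : Ep (pd j) h = h (Some j).
Proof.
rewrite Ep_opt !ffunE /= mul0r add0r (bigD1 j) //= ffunE eqxx mul1r big1 ?addr0 //.
move=> i /negbTE ij; rewrite ffunE.
by have -> : (Some i == Some j) = false := ij; rewrite mul0r.
Qed.

Lemma pd_pdist j : is_pdist (pd j).
Proof.
split; first by move=> pi; rewrite ffunE ler0n.
by have := Ep_pd j (fun _ => 1); rewrite /Ep; under eq_bigr do rewrite mulr1.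
Qed.

Lemma fstar_Mk' k : (k < N)%N -> fstar (Mk R N k) = 1.
Proof. by move=> kN; exact: (@fstar_Mk R N (Ordinal kN)). Qed.

Definition pu : {ffun option 'I_N -> R} := [ffun pi => if pi is Some _ then N%:R^-1 else 0].

Lemma Ep_pu h : Ep pu h = N%:R^-1 * \sum_j h (Some j).
Proof.
by rewrite Ep_opt ffunE mul0r add0r mulr_sumr; apply: eq_bigr => j _; rewrite ffunE.
Qed.

Lemma pu_pdist : (0 < N)%N -> is_pdist pu.
Proof.
move=> N0; split; first by case=> [j|]; rewrite ffunE ?invr_ge0 ?ler0n.
have := Ep_pu (fun _ => 1); rewrite /Ep; under eq_bigr do rewrite mulr1.
by move=> ->; rewrite sumr_const card_ord -[_ *+ N]mulr_natr mul1r mulVf // pnatr_eq0 -lt0n.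
Qed.

Lemma upper (eps : R) (nu : 'I_(size (Ms R N)) -> R) : 0 < eps -> eps <= 4^-1 ->
  (0 < N)%N -> N%:R * eps ^+ 2 <= 2^-1 ->
  (forall i, 0 <= nu i) -> \sum_i nu i = 1 -> dec_c (Ms R N) (mixture nu) eps <= 0.
Proof.
move=> e0 e4 N0 Ne nu0 nu1.
have nuv pi := @mixture_valid R _ _ _ nu pi (valid_Ms R N) nu0 nu1.
have nule1 i : nu i <= 1 by rewrite -nu1; exact: sum_le_total.
have [[i hi]|hall] := pselect (exists i, eps ^+ 2 < nu i).
  set j := cast_ord (size_Ms R N) i.
  apply: le_trans (@dec_c_le _ _ _ _ _ _ _ (pd_pdist j)) _.
  rewrite /dec_inner /Ms /mkseq big_map; apply: bmax_le => // k.
  rewrite mem_iota add0n => /andP[_ kN] /=; rewrite !Ep_pd /gM fstar_Mk' // fM_Mk_Some.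
  have [nn nn1] := nuv (Some j).
  rewrite /Mk hell2_point // mass_mix_Some nu1 mu_val.
  have -> : cast_ord (esym (size_Ms R N)) j = i by apply: val_inj.
  have [_|kj] := eqVneq k (val j) => /=; first by move=> _; rewrite mulr1n subrr.
  move=> h2; exfalso.
  have := @sqb1 R (nu i); rewrite nu0 nule1 /= => h1; lra.
have hall' i : nu i <= eps ^+ 2 by rewrite leNgt; apply/negP => h; apply: hall; exists i.
apply: le_trans (@dec_c_le _ _ _ _ _ _ _ (pu_pdist N0)) _.
rewrite /dec_inner /Ms /mkseq big_map; apply: bmax_le => // k.
rewrite mem_iota add0n => /andP[_ kN] /=; rewrite Ep_pu => h; exfalso.
set k' := Ordinal kN.
have hk : 1 <= hell2 (Mk R N k (Some k')) (mixture nu (Some k')).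
  have [nn nn1] := nuv (Some k').
  rewrite /Mk hell2_point // mass_mix_Some mu_val ifT; last exact: eqxx.
  have := @sqb3 R (nu (cast_ord (esym (size_Ms R N)) k')).
  rewrite nu0 /= (le_trans (hall' _)) /=; first lra.
  have : eps ^+ 2 <= 16^-1 by rewrite expr2; have := ltW e0; nra.
  by [].
have : hell2 (Mk R N k (Some k')) (mixture nu (Some k')) <=
       \sum_j hell2 (Mk R N k (Some j)) (mixture nu (Some j)).
  by apply: (@sum_le_total R _ (fun j => hell2 (Mk R N k (Some j)) (mixture nu (Some j)))) => j; exact: hell2_ge0.
have Npos : 0 < N%:R :> R by rewrite ltr0n.
move: h; set S := \sum_j _ => h hS.
have : N%:R^-1 <= eps ^+ 2.
  by apply: le_trans h; rewrite -[leLHS]mulr1 ler_pM2l ?invr_gt0 //; lra.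
move=> h2.
have h3 : 1 <= N%:R * eps ^+ 2.
  by rewrite -[leLHS](mulfV (lt0r_neq0 Npos)) ler_pM2l.
lra.
Qed.

End Up.

Section Low.
Variables (R : realType) (N : nat).
Hypothesis N0 : (0 < N)%N.
Hypothesis N4 : 4 <= N%:R :> R.

Definition nuU : 'I_(size (Ms R N)) -> R := fun _ => N%:R^-1.
Definition Mbar := mixture nuU.

Lemma Npos : 0 < N%:R :> R. Proof. by rewrite ltr0n. Qed.
Lemma tN : N%:R * N%:R^-1 = 1 :> R. Proof. by rewrite mulfV // lt0r_neq0 // Npos. Qed.
Lemma t0 : 0 < N%:R^-1 :> R. Proof. by rewrite invr_gt0 Npos. Qed.
Lemma t4 : N%:R^-1 <= 4^-1 :> R.
Proof. have := tN; have := t0; have := N4; set t := N%:R^-1; set n := N%:R; nra. Qed.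

Lemma nuU0 i : 0 <= nuU i. Proof. exact: ltW t0. Qed.
Lemma nuU1 : \sum_i nuU i = 1.
Proof.
rewrite /nuU sumr_const card_ord size_Ms -[_ *+ N]mulr_natr mulrC; exact: tN.
Qed.

Lemma muU (j : 'I_N) : mu R N nuU (val j) = N%:R^-1.
Proof. by rewrite mu_val. Qed.

Definition nuvU pi := @mixture_valid R _ _ _ nuU pi (valid_Ms R N) nuU0 nuU1.

Lemma fstar_Mbar : fstar Mbar = 2^-1.
Proof.
apply/eqP; rewrite eq_le; apply/andP; split.
  apply: bmax_le; first by rewrite invr_ge0 ler0n.
  move=> -[j|] _ _; rewrite ?fM_mix_Some ?fM_mix_None.
    by rewrite muU; apply: le_trans t4 _; rewrite lef_pV2 ?posrE //; lra.
  by rewrite -mulr_suml nuU1 mul1r.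
have := @bmax_ge R _ (index_enum (option 'I_N)) xpredT (fM Mbar) None.
by rewrite /Mbar fM_mix_None -mulr_suml nuU1 mul1r; apply; rewrite ?mem_index_enum.
Qed.

Lemma hbound k (j : 'I_N) :
  hell2 (Mk R N k (Some j)) (Mbar (Some j)) <= 2 * N%:R^-1 + 2 * (k == val j)%:R.
Proof.
have [nn nn1] := nuvU (Some j).
rewrite /Mk hell2_point // mass_mix_Some nuU1 muU.
have := t0; have := t4.
have [_|kj] := eqVneq k (val j) => /=.
  by rewrite mulr1n; have := @sqb4 R (N%:R^-1); lra.
rewrite mulr0n; have := @sqb2 R (N%:R^-1); lra.
Qed.

Lemma lower (eps : R) (p : {ffun option 'I_N -> R}) : 4^-1 <= N%:R * eps ^+ 2 ->
  is_pdist p -> 64^-1 <= dec_inner (Mbar :: Ms R N) Mbar eps p.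
Proof.
move=> Ne [p0 p1].
rewrite /dec_inner big_cons.
have -> : Ep p (fun pi => hell2 (Mbar pi) (Mbar pi)) <= eps ^+ 2.
  rewrite /Ep big1 ?sqr_ge0 // => pi _; by rewrite hell2_same mulr0.
set Q := \sum_j p (Some j).
have hQ : p None + Q = 1 by rewrite -p1 big_opt.
have Q0 : 0 <= Q by apply: sumr_ge0.
have pa0 := p0 None.
have hEM : Ep p (gM Mbar) = Q * (2^-1 - N%:R^-1).
  rewrite Ep_opt /gM fstar_Mbar fM_mix_None -mulr_suml nuU1 mul1r subrr mulr0 add0r.
  rewrite mulr_suml; apply: eq_bigr => j _; by rewrite fM_mix_Some muU.
have := t0; have := t4; set t := N%:R^-1 => tt4 tt0.
case: (lerP 16^-1 Q) => hQ16.
  rewrite le_max hEM; apply/orP; left.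
  have h1 : 0 <= Q - 16^-1 by lra.
  have h2 : 0 <= 4^-1 - t by lra.
  have := mulr_ge0 Q0 h2; rewrite -/t; nra.
rewrite le_max; apply/orP; right.
have kex : exists k : 'I_N, forall j, p (Some k) <= p (Some j).
  have [k _ hk] := @arg_minP _ _ 'I_N (Ordinal N0) xpredT (fun j => p (Some j)) isT.
  by exists k => j; exact: hk.
have [k hk] := kex.
have hkQ : N%:R * p (Some k) <= Q.
  rewrite /Q; apply: le_trans _ (ler_sum _ (fun j _ => hk j)).
  by rewrite sumr_const card_ord mulr_natl.
have hqk : p (Some k) <= Q * t.
  have := tN; rewrite -/t => htN.
  have := p0 (Some k); nra.
rewrite /Ms /mkseq big_map.
apply: le_trans (@bmax_ge R _ _ _ _ (val k) _ _).
- rewrite Ep_opt /gM (@fstar_Mk' R N _ (ltn_ord k)) fM_Mk_None.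
  rewrite (eq_bigr (fun j => p (Some j) - p (Some j) * (val k == val j)%:R)); last first.
    by move=> j _; rewrite fM_Mk_Some mulrBr mulr1.
  rewrite sumrB sum_ind -/Q; nra.
- by rewrite mem_iota add0n ltn_ord.
- rewrite /= Ep_opt.
  have -> : hell2 (Mk R N k None) (Mbar None) = 0.
    have [nn nn1] := nuvU None.
    by rewrite /Mk hell2_point // mass_mix_None nuU1 sqrtr1 mulr1 subrr.
  rewrite mulr0 add0r.
  apply: le_trans (ler_sum _ (fun j _ => ler_wpM2l (p0 (Some j)) (hbound k j))) _.
  rewrite (eq_bigr (fun j => p (Some j) * (2 * t) + 2 * (p (Some j) * (val k == val j)%:R))); last first.
    by move=> j _; rewrite -/t; ring.
  rewrite big_split /= -mulr_suml -mulr_sumr sum_ind -/Q.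
  have := tN; rewrite -/t => htN.
  have : 4^-1 * t <= eps ^+ 2.
    have := sqr_ge0 eps; nra.
  nra.
Qed.

End Low.

Section Fin.
Variable R : realType.

Lemma bmax_le_In (T : Type) (r : seq T) (P : pred T) (F : T -> R) c :
  0 <= c -> (forall x, List.In x r -> P x -> F x <= c) ->
  \big[Num.max/0]_(y <- r | P y) F y <= c.
Proof.
move=> c0; elim: r => [|y r IH] H; rewrite ?big_nil ?big_cons //.
have IH' : \big[Num.max/0]_(y <- r | P y) F y <= c.
  by apply: IH => x xr; apply: H; right.
case: ifP => Py //; rewrite ge_max IH' andbT; apply: H => //; by left.
Qed.

Lemma mu_bounds N (nu : 'I_(size (Ms R N)) -> R) j :
  (forall i, 0 <= nu i) -> \sum_i nu i = 1 -> 0 <= mu R N nu j <= 1.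
Proof.
move=> nu0 nu1; apply/andP; split.
  by apply: sumr_ge0 => i _; apply: mulr_ge0; rewrite ?ler0n.
rewrite -nu1; apply: ler_sum => i _.
by case: (_ == _); rewrite ?mulr1 ?mulr0 ?lexx.
Qed.

Lemma ub_class N (eps : R) (Mb : model R (option 'I_N) unit) : (0 < N)%N ->
  co (Ms R N) Mb -> dec_c (Mb :: Ms R N) Mb eps <= 1.
Proof.
move=> N0 [nu [nu0 [nu1 ->]]].
apply: le_trans (@dec_c_le _ _ _ _ _ _ _ (@pu_pdist R N N0)) _.
apply: bmax_le_In => // M HM _.
have Npos : 0 < N%:R :> R by rewrite ltr0n.
rewrite Ep_pu -[leRHS](mulVf (lt0r_neq0 Npos)) ler_pM2l ?invr_gt0 //.
apply: (@le_trans _ _ (\sum_(j : 'I_N) (1 : R))); last by rewrite sumr_const card_ord.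
apply: ler_sum => j _.
case: HM => [<-|].
  have hb := @mu_bounds N nu _ nu0 nu1.
  rewrite /gM fM_mix_Some.
  have : fstar (mixture nu) <= 1.
    apply: bmax_le => // -[i|] _ _; rewrite ?fM_mix_Some ?fM_mix_None.
      by case/andP: (hb i).
    by rewrite -mulr_suml nu1 mul1r invf_le1 ?ler1n.
  by case/andP: (hb j) => ? ?; lra.
rewrite /Ms /mkseq => /List.in_map_iff [k [<- /List.in_seq kin]].
have kN : (k < N)%N by apply/ssrnat.ltP; case: kin.
rewrite /gM (@fstar_Mk' R N _ kN) fM_Mk_Some.
by rewrite lerBlDr lerDl ler0n.
Qed.

End Fin.

Theorem proposition4p9 (R : realType) :
  exists c c' eps0 : R, 0 < c /\ 0 < c' /\ 0 < eps0 /\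
    forall eps : R, 0 < eps -> eps < eps0 ->
      exists (Pi : finType) (O : eqType) (Ms : seq (model R Pi O)),
        valid_class Ms /\
        dec_c_co Ms eps <= c * eps /\
        c' * powR eps (2%:R / 3%:R) <= dec_c_class Ms eps.
Proof.
exists 1, 64^-1, 4^-1; split; first by [].
split; first by rewrite invr_gt0.
split; first by rewrite invr_gt0.
move=> eps e0 e4.
set x := (2 * eps ^+ 2)^-1.
have e2 : 0 < eps ^+ 2 by rewrite exprn_gt0.
have hx : x * (2 * eps ^+ 2) = 1 by rewrite mulVf // lt0r_neq0 // mulr_gt0.
have x0 : 0 <= x by rewrite invr_ge0 mulr_ge0 // ltW.
set N := Num.truncn x.
have /andP[Nle Ngt] := truncn_itv x0.
rewrite -/N in Nle Ngt.
have e16 : eps ^+ 2 < 16^-1 by rewrite expr2; nra.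
have Ne1 : N%:R * eps ^+ 2 <= 2^-1.
  have := ler_wpM2r (ltW e2) Nle; nra.
have Ngt' : N%:R + 1 > x by rewrite -natr1 in Ngt.
have Ne2 : 4^-1 <= N%:R * eps ^+ 2.
  have := Ngt'; rewrite -(ltr_pM2r e2); nra.
have N4 : 4 <= N%:R :> R.
  have : 8 < x.
    have h8 : 8 * (2 * eps ^+ 2) < 1 by lra.
    have a0 : 0 < 2 * eps ^+ 2 by rewrite mulr_gt0.
    by rewrite -(ltr_pM2r a0) hx.
  lra.
have N0 : (0 < N)%N by rewrite -(ltr0n R); lra.
exists (option 'I_N)%type, unit, (Ms R N); split; first exact: valid_Ms.
have coU : co (Ms R N) (Mbar R N) by exists (nuU R N); split; [exact: nuU0 | split; [exact: nuU1 | by []]].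
split.
  apply: ge_sup; first by exists (dec_c (Ms R N) (Mbar R N) eps), (Mbar R N).
  move=> v [Mb [[nu [nu0 [nu1 ->]]] ->]].
  apply: le_trans (@upper R N eps nu e0 (ltW e4) N0 Ne1 nu0 nu1) _.
  by rewrite mul1r ltW.
have hp : powR eps (2%:R / 3%:R) <= 1.
  rewrite -[leRHS](powRr0 eps); apply: ger_powR.
    by rewrite e0 /=; lra.
  by rewrite divr_ge0 ?ler0n.
apply: (@le_trans _ _ (dec_c (Mbar R N :: Ms R N) (Mbar R N) eps)).
  apply: (@le_trans _ _ 64^-1); first by rewrite -[leRHS]mulr1 ler_pM2l ?invr_gt0.
  apply: (@dec_c_ge _ _ _ _ _ _ _ _ (@pu_pdist R N N0)) => p pp.
  exact: lower.
apply: ub_le_sup; last by exists (Mbar R N).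
exists 1 => v [Mb [cMb ->]]; exact: ub_class.
Qed.
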